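(* Suppose that for every atom $z$ of $L(\mathbb{R}^3)$ there exists a finite set $\Omega(z)$ of atoms of $L(\mathbb{R}^3)$ with $e_1,e_2,e_3,b_{12},b_{13},b_{23},z\in\Omega(z)$ such that every frame function $f$ on $\Omega(z)$ satisfying $f(e_i)=0$ ($1\le i\le 3$), $f(b_{ij})=0$ ($1\le i<j\le 3$) and $|f(x)|\le 1$ for all $x\in\Omega(z)$ also satisfies $|f(z)|\le \tfrac12$. Then every bounded frame function $f$ on the set of all atoms of $L(\mathbb{R}^3)$ satisfying $f(e_i)=0$ for all $i$ and $f(b_{ij})=0$ for all $i<j$ is identically zero.
   Context: $L(\mathbb{R}^3)$ denotes the lattice of subspaces of $\mathbb{R}^3$ (with its standard inner product); its atoms are the one-dimensional subspaces (rays). A frame function on a set $\Gamma$ of atoms of $L(\mathbb{R}^3)$ is a real function $f$ on $\Gamma$ for which there is a constant $C$ such that $f(x)+f(x')+f(x'')=C$ for every triple $x,x',x''$ of pairwise orthogonal atoms in $\Gamma$. Let $\vec{e_1}=(1,0,0)$, $\vec{e_2}=(0,1,0)$, $\vec{e_3}=(0,0,1)$ and $\vec{b_{ij}}=\frac{1}{\sqrt{2}}(\vec{e_i}+\vec{e_j})$ for $1\le i<j\le 3$. Let $e_i$ and $b_{ij}$ denote the rays spanned by these vectors. *)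

(* Defs.v *)
From mathcomp Require Import all_boot all_order all_algebra.
From Stdlib Require Rdefinitions.
From mathcomp Require Import Rstruct.
Notation R := Rdefinitions.R.
Set Implicit Arguments. Unset Strict Implicit. Unset Printing Implicit Defensive.
Import Order.TTheory GRing.Theory Num.Theory.
Local Open Scope ring_scope.

Definition vec3 := 'rV[R]_3.
Definition dot (u v : vec3) : R := (u *m v^T) 0 0.

(* Subsets of R^3 are predicates; an atom of L(R^3) is a one-dimensional
   subspace, i.e. a set of the form R v with v <> 0. *)
Definition subset3 := vec3 -> Prop.
Definition ray (v : vec3) : subset3 := fun w => exists t : R, w = t *: v.
Definition is_atom (x : subset3) : Prop := exists v : vec3, v != 0 /\ x = ray v.

Definition orth (x y : subset3) : Prop :=
  forall u w, x u -> y w -> dot u w = 0.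

Definition frame_function (Gamma : subset3 -> Prop) (f : subset3 -> R) : Prop :=
  exists C : R, forall x x' x'' : subset3,
    Gamma x -> Gamma x' -> Gamma x'' ->
    orth x x' -> orth x x'' -> orth x' x'' ->
    f x + f x' + f x'' = C.

Definition finite_atoms (Omega : subset3 -> Prop) : Prop :=
  exists s : seq subset3, forall x, Omega x <-> List.In x s.

Definition evec (i : 'I_3) : vec3 := delta_mx 0 i.
Definition bvec (i j : 'I_3) : vec3 := (Num.sqrt 2)^-1 *: (evec i + evec j).

Definition e_ (i : 'I_3) : subset3 := ray (evec i).
Definition b_ (i j : 'I_3) : subset3 := ray (bvec i j).

Definition vanishes_on_eb (f : subset3 -> R) : Prop :=
  (forall i : 'I_3, f (e_ i) = 0) /\
  (forall i j : 'I_3, (i < j)%N -> f (b_ i j) = 0).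

(* Main.v *)
Require Import Defs.
From mathcomp Require Import all_boot all_order all_algebra.
From mathcomp Require Import Rstruct.
Import Order.TTheory GRing.Theory Num.Theory.
Local Open Scope ring_scope.

Theorem mainTheorem2 :
  (forall z : subset3, is_atom z ->
     exists Omega : subset3 -> Prop,
       (forall x, Omega x -> is_atom x) /\ finite_atoms Omega /\
       (forall i : 'I_3, Omega (e_ i)) /\
       (forall i j : 'I_3, (i < j)%N -> Omega (b_ i j)) /\
       Omega z /\
       (forall f : subset3 -> R,
          frame_function Omega f -> vanishes_on_eb f ->
          (forall x, Omega x -> `|f x| <= 1) ->
          `|f z| <= 2^-1)) ->
  forall f : subset3 -> R,
    frame_function is_atom f ->
    (exists M : R, forall x, is_atom x -> `|f x| <= M) ->
    vanishes_on_eb f ->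
    forall x, is_atom x -> f x = 0.
Proof.
move=> H f [C HC] [M HM] [He Hb].
have half : forall K : R, 0 < K -> (forall x, is_atom x -> `|f x| <= K) ->
    forall z, is_atom z -> `|f z| <= K / 2.
  move=> K K0 HK z za.
  have [Om [Oa [_ [_ [_ [Oz HO]]]]]] := H z za.
  have := HO (fun x => f x / K).
  have Kn : K != 0 by rewrite gt_eqF.
  move=> /(_ _ _ _) h.
  have {h} h : `|f z / K| <= 2^-1.
    apply: h.
    - exists (C / K) => x x' x'' ox ox' ox'' o1 o2 o3.
      by rewrite -!mulrDl (HC x x' x'' (Oa _ ox) (Oa _ ox') (Oa _ ox'')).
    - by split=> [i|i j ij]; rewrite ?He ?Hb // mul0r.
    - move=> x ox; rewrite normrM normfV (gtr0_norm K0) ler_pdivrMr // mul1r.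
      exact: HK (Oa _ ox).
  rewrite normrM normfV (gtr0_norm K0) ler_pdivrMr // in h.
  by rewrite mulrC.
move=> x xa.
have [M0|M0] := leP M 0.
  by apply/eqP; rewrite -normr_le0 (le_trans (HM x xa)).
have iter : forall n : nat, forall y, is_atom y -> `|f y| <= M / (2 ^+ n).
  elim=> [|n IH] y ya; first by rewrite expr0 divr1; exact: HM.
  have Kp : 0 < M / 2 ^+ n by rewrite divr_gt0 // exprn_gt0.
  have := half _ Kp IH y ya.
  by rewrite exprS -mulrA -invfM (mulrC (2 ^+ n)).
apply/eqP; rewrite -normr_le0 leNgt; apply/negP => a0.
set a := `|f x| in a0.
have q0 : 0 <= M / a by rewrite divr_ge0 // ltW.
have hb := archi_boundP q0.
set n := Num.Def.archi_bound (M / a) in hb; clearbody n.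
have h2 : (n%:R : R) < 2 ^+ n.
  by rewrite -natrX ltr_nat ltn_expl.
have := iter n x xa; rewrite -/a ler_pdivlMr ?exprn_gt0 // => h.
have : M < a * 2 ^+ n.
  rewrite -ltr_pdivrMl // mulrC; exact: lt_trans hb h2.
by move=> h3; have := lt_le_trans h3 h; rewrite ltxx.
Qed.
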